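(* Let $M$ be a monoid with finitely many left ideals and finitely many right ideals. Then $M$ is residually finite if and only if all Schützenberger groups $\Gamma(H)$, for $H$ ranging over the $\mathcal{H}$-classes of $M$, are residually finite.
   Context: Green's relations: $x\mathcal{R}y$ iff $xM=yM$, $x\mathcal{L}y$ iff $Mx=My$, $\mathcal{H}=\mathcal{R}\cap\mathcal{L}$. For an $\mathcal{H}$-class $H$, $\mathrm{Stab}(H)=\{s\in M:Hs=H\}$, $\sigma=\{(x,y)\in\mathrm{Stab}(H)^2:hx=hy \text{ for all } h\in H\}$, and the Schützenberger group of $H$ is the group $\Gamma(H)=\mathrm{Stab}(H)/\sigma$. A monoid/group is residually finite if distinct elements are separated by homomorphisms to finite monoids/groups. No regularity of $M$ is assumed. *)

(* Defs.v *)
From Stdlib Require Import List.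
Set Implicit Arguments.

Record monoid := Monoid {
  carrier :> Type;
  mop : carrier -> carrier -> carrier;
  mone : carrier;
  mopA : forall x y z, mop x (mop y z) = mop (mop x y) z;
  mop1l : forall x, mop mone x = x;
  mop1r : forall x, mop x mone = x
}.
Arguments mop {m} _ _.
Arguments mone {m}.

Definition finite_type (T : Type) : Prop := exists l : list T, forall x, In x l.

Definition finite_monoid (N : monoid) : Prop := finite_type N.

Definition is_group (G : monoid) : Prop :=
  forall g : G, exists g' : G, mop g g' = mone /\ mop g' g = mone.

Definition monoid_hom {M N : monoid} (f : M -> N) : Prop :=
  f mone = mone /\ forall x y, f (mop x y) = mop (f x) (f y).

Definition residually_finite_monoid (M : monoid) : Prop :=
  forall x y : M, x <> y ->
    exists (N : monoid) (f : M -> N),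
      finite_monoid N /\ monoid_hom f /\ f x <> f y.

Definition subset_eq {M : monoid} (A B : M -> Prop) : Prop := forall z, A z <-> B z.

Definition finitely_many {M : monoid} (P : (M -> Prop) -> Prop) : Prop :=
  exists l : list (M -> Prop), forall I, P I -> exists J, In J l /\ subset_eq I J.

Definition left_ideal {M : monoid} (I : M -> Prop) : Prop :=
  (exists x, I x) /\ forall (m x : M), I x -> I (mop m x).
Definition right_ideal {M : monoid} (I : M -> Prop) : Prop :=
  (exists x, I x) /\ forall (m x : M), I x -> I (mop x m).

Definition greenR {M : monoid} (x y : M) : Prop :=
  forall z, (exists u, z = mop x u) <-> (exists u, z = mop y u).
Definition greenL {M : monoid} (x y : M) : Prop :=
  forall z, (exists u, z = mop u x) <-> (exists u, z = mop u y).
Definition greenH {M : monoid} (x y : M) : Prop := greenR x y /\ greenL x y.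

(* The H-class of a (every H-class is of this form). *)
Definition Hclass {M : monoid} (a : M) : M -> Prop := fun x => greenH x a.

Definition Stab {M : monoid} (H : M -> Prop) (s : M) : Prop :=
  forall z, (exists h, H h /\ z = mop h s) <-> H z.

Definition schsigma {M : monoid} (H : M -> Prop) (x y : M) : Prop :=
  Stab H x /\ Stab H y /\ forall h, H h -> mop h x = mop h y.

(* A homomorphism Gamma(H) = Stab(H)/sigma -> G, presented (via the universal
   property of the quotient) as a map on representatives: a monoid
   homomorphism of the submonoid Stab(H) into G that is constant on
   sigma-classes. *)
Definition schutz_hom {M : monoid} (H : M -> Prop) {G : monoid} (phi : M -> G)
  : Prop :=
  phi mone = mone /\
  (forall s t, Stab H s -> Stab H t -> phi (mop s t) = mop (phi s) (phi t)) /\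
  (forall s t, schsigma H s t -> phi s = phi t).

Definition schutz_residually_finite {M : monoid} (H : M -> Prop) : Prop :=
  forall x y, Stab H x -> Stab H y -> ~ schsigma H x y ->
    exists (G : monoid) (phi : M -> G),
      finite_monoid G /\ is_group G /\ schutz_hom H phi /\ phi x <> phi y.

(* Main.v *)
Require Import Defs.
From Stdlib Require Import List Classical ClassicalEpsilon FunctionalExtensionality PropExtensionality ProofIrrelevance.
Import ListNotations.

Notation "x ** y" := (mop x y) (at level 40, left associativity).
Arguments mopA {m}.
Arguments mop1l {m}.
Arguments mop1r {m}.
Ltac massoc := first [apply mopA | symmetry; apply mopA].

Section Basics.
Variable M : monoid.

Definition Rr (x y : M) := (exists c, x = y ** c) /\ (exists d, y = x ** d).
Definition Ll (x y : M) := (exists p, x = p ** y) /\ (exists q, y = q ** x).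
Definition HH (x y : M) := Rr x y /\ Ll x y.

Lemma greenR_Rr x y : greenR x y <-> Rr x y.
Proof.
  split.
  - intro h. split.
    + destruct (proj1 (h x) (ex_intro _ mone (eq_sym (mop1r x)))) as [u hu]. eauto.
    + destruct (proj2 (h y) (ex_intro _ mone (eq_sym (mop1r y)))) as [u hu]. eauto.
  - intros [[c hc] [d hd]] z. split; intros [u hu]; rewrite hu.
    + exists (c ** u). rewrite hc. massoc.
    + exists (d ** u). rewrite hd. massoc.
Qed.

Lemma greenL_Ll x y : greenL x y <-> Ll x y.
Proof.
  split.
  - intro h. split.
    + destruct (proj1 (h x) (ex_intro _ mone (eq_sym (mop1l x)))) as [u hu]. eauto.
    + destruct (proj2 (h y) (ex_intro _ mone (eq_sym (mop1l y)))) as [u hu]. eauto.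
  - intros [[c hc] [d hd]] z. split; intros [u hu]; rewrite hu.
    + exists (u ** c). rewrite hc. massoc.
    + exists (u ** d). rewrite hd. massoc.
Qed.

Lemma Hclass_HH (a z : M) : Hclass a z <-> HH z a.
Proof.
  unfold Hclass, greenH, HH. rewrite greenR_Rr, greenL_Ll. tauto.
Qed.

Lemma Rr_refl x : Rr x x.
Proof. split; exists mone; symmetry; apply mop1r. Qed.
Lemma Ll_refl x : Ll x x.
Proof. split; exists mone; symmetry; apply mop1l. Qed.
Lemma Rr_sym x y : Rr x y -> Rr y x.
Proof. unfold Rr; tauto. Qed.
Lemma Ll_sym x y : Ll x y -> Ll y x.
Proof. unfold Ll; tauto. Qed.
Lemma Rr_trans x y z : Rr x y -> Rr y z -> Rr x z.
Proof.
  intros [[c1 h1] [d1 e1]] [[c2 h2] [d2 e2]]. split.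
  - exists (c2 ** c1). rewrite h1, h2. massoc.
  - exists (d1 ** d2). rewrite e2, e1. massoc.
Qed.
Lemma Ll_trans x y z : Ll x y -> Ll y z -> Ll x z.
Proof.
  intros [[c1 h1] [d1 e1]] [[c2 h2] [d2 e2]]. split.
  - exists (c1 ** c2). rewrite h1, h2. massoc.
  - exists (d2 ** d1). rewrite e2, e1. massoc.
Qed.
Lemma HH_refl x : HH x x.
Proof. split; [apply Rr_refl | apply Ll_refl]. Qed.

Section Fix_a.
Variable a : M.
Let H := Hclass a.

Lemma Stab_one : Stab H mone.
Proof.
  intro z. split.
  - intros [h [hh e]]. rewrite mop1r in e. subst. exact hh.
  - intro hz. exists z. split; auto. symmetry; apply mop1r.
Qed.

Lemma Stab_maps s h : Stab H s -> H h -> H (h ** s).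
Proof. intros hs hh. apply (hs (h ** s)). eauto. Qed.

Lemma Stab_mul s t : Stab H s -> Stab H t -> Stab H (s ** t).
Proof.
  intros hs ht z. split.
  - intros [h [hh e]]. subst. rewrite mopA. apply Stab_maps; auto. apply Stab_maps; auto.
  - intro hz. destruct (proj2 (ht z) hz) as [h1 [hh1 e1]].
    destruct (proj2 (hs h1) hh1) as [h2 [hh2 e2]].
    exists h2. split; auto. subst. massoc.
Qed.

Lemma a_in_H : H a.
Proof. apply Hclass_HH, HH_refl. Qed.

Lemma F2 z : H z -> exists g, Stab H g /\ z = a ** g.
Proof.
  intro hz. apply Hclass_HH in hz as [[[g eg] [g' eg']] hL].
  exists g. split; [|exact eg].
  intro w. split.
  - intros [h [hh ew]]. subst w. apply Hclass_HH in hh as [hR hLh].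
    apply Hclass_HH. split.
    + apply Rr_trans with h; auto. split.
      * exists g. reflexivity.
      * exists g'. destruct hLh as [[p ep] _]. rewrite ep.
        rewrite <- (mopA p a g), <- eg, <- mopA, <- eg'. reflexivity.
    + destruct hLh as [[p ep] [q eq]]. destruct hL as [[p1 ep1] [q1 eq1]].
      apply Ll_trans with z; [|split; eauto].
      split.
      * exists p. rewrite ep, <- mopA, <- eg. reflexivity.
      * exists q. rewrite eg, eq. massoc.
  - intro hw. apply Hclass_HH in hw as [hR hLw].
    assert (hLwz : Ll w z) by (apply Ll_trans with a; [exact hLw | apply Ll_sym; exact hL]).
    destruct hLwz as [[p ep] [q eq]].
    exists (w ** g'). split.
    + apply Hclass_HH. split.
      * apply Rr_trans with w; auto. split; [exists g'; reflexivity|].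
        exists g. rewrite ep. rewrite <- (mopA p z g'), <- eg', <- mopA, <- eg. reflexivity.
      * split.
        -- exists p. rewrite ep, <- mopA, <- eg'. reflexivity.
        -- exists q. rewrite eg', eq. massoc.
    + rewrite ep. rewrite <- (mopA p z g'), <- eg', <- mopA, <- eg. reflexivity.
Qed.

Lemma sigma_of_eq g g' : Stab H g -> Stab H g' -> a ** g = a ** g' -> schsigma H g g'.
Proof.
  intros hg hg' e. split; [|split]; auto.
  intros h hh. apply Hclass_HH in hh as [_ [[p ep] _]]. subst h.
  rewrite <- !mopA, e. reflexivity.
Qed.

End Fix_a.
End Basics.
Section Quot.
Variable M : monoid.
Variable P : M -> Prop.
Variable E : M -> M -> Prop.
Hypothesis P1 : P mone.
Hypothesis Pmul : forall x y, P x -> P y -> P (x ** y).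
Hypothesis Erefl : forall x, P x -> E x x.
Hypothesis Esym : forall x y, E x y -> E y x.
Hypothesis Etrans : forall x y z, E x y -> E y z -> E x z.
Hypothesis EP : forall x y, E x y -> P x.
Hypothesis Econg : forall x y z w, E x y -> E z w -> E (x ** z) (y ** w).

Definition rep (z : M) : M := epsilon (inhabits mone) (fun r => E r z).

Lemma rep_spec z : P z -> E (rep z) z.
Proof. intro hz. unfold rep. apply (epsilon_spec (inhabits mone) (fun r => E r z)). exists z. auto. Qed.

Lemma rep_canon z z' : E z z' -> rep z = rep z'.
Proof.
  intro e. unfold rep. f_equal. apply functional_extensionality. intro r.
  apply propositional_extensionality. split; eauto.
Qed.

Lemma rep_P z : P z -> P (rep z).
Proof. intro hz. apply (EP _ _ (rep_spec z hz)). Qed.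

Lemma rep_idem z : P z -> rep (rep z) = rep z.
Proof. intro hz. apply rep_canon. apply rep_spec, hz. Qed.

Definition Q := {z : M | P z /\ rep z = z}.

Definition qmk (z : M) (hz : P z) : Q := exist _ (rep z) (conj (rep_P z hz) (rep_idem z hz)).

Definition qop (x y : Q) : Q :=
  qmk (proj1_sig x ** proj1_sig y) (Pmul _ _ (proj1 (proj2_sig x)) (proj1 (proj2_sig y))).
Definition qone : Q := qmk mone P1.

Lemma Q_eq (x y : Q) : proj1_sig x = proj1_sig y -> x = y.
Proof. destruct x, y; simpl. intro e. apply subset_eq_compat. exact e. Qed.

Lemma qmk_eq z z' hz hz' : E z z' -> qmk z hz = qmk z' hz'.
Proof. intro e. apply Q_eq. simpl. apply rep_canon, e. Qed.

Lemma Q_E (x : Q) : E (proj1_sig x) (proj1_sig x).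
Proof. apply Erefl, (proj1 (proj2_sig x)). Qed.

Lemma Q_rep (x : Q) : E (rep (proj1_sig x)) (proj1_sig x).
Proof. apply rep_spec, (proj1 (proj2_sig x)). Qed.

Lemma qA x y z : qop x (qop y z) = qop (qop x y) z.
Proof.
  apply Q_eq. unfold qop, qmk; simpl. apply rep_canon.
  destruct x as [x [hx ex]], y as [y [hy ey]], z as [z [hz ez]]; simpl.
  apply Etrans with (x ** (y ** z)).
  - apply Econg; auto. apply rep_spec; auto.
  - rewrite mopA. apply Econg; auto. apply Esym, rep_spec; auto.
Qed.

Lemma q1l x : qop qone x = x.
Proof.
  apply Q_eq. unfold qop, qone, qmk; simpl.
  destruct x as [x [hx ex]]; simpl. rewrite <- ex at 2. apply rep_canon.
  rewrite <- (mop1l x) at 2. apply Econg; auto. apply rep_spec; auto.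
Qed.

Lemma q1r x : qop x qone = x.
Proof.
  apply Q_eq. unfold qop, qone, qmk; simpl.
  destruct x as [x [hx ex]]; simpl. rewrite <- ex at 2. apply rep_canon.
  rewrite <- (mop1r x) at 2. apply Econg; auto. apply rep_spec; auto.
Qed.

Definition qmon : monoid := Monoid qop qone qA q1l q1r.

Definition qmap (z : M) : qmon :=
  match excluded_middle_informative (P z) with
  | left hz => qmk z hz
  | right _ => qone
  end.

Lemma qmap_P z (hz : P z) : qmap z = qmk z hz.
Proof.
  unfold qmap. destruct (excluded_middle_informative (P z)) as [h|h].
  - apply Q_eq. reflexivity.
  - contradiction.
Qed.

Lemma qmap_one : qmap mone = mone.
Proof. rewrite (qmap_P mone P1). reflexivity. Qed.

Lemma qmap_mul x y : P x -> P y -> qmap (x ** y) = mop (qmap x) (qmap y).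
Proof.
  intros hx hy. rewrite (qmap_P _ (Pmul _ _ hx hy)), (qmap_P _ hx), (qmap_P _ hy).
  simpl. unfold qop. apply qmk_eq. simpl. apply Econg; apply Esym, rep_spec; auto.
Qed.

Lemma qmap_inj x y : P x -> P y -> qmap x = qmap y -> E x y.
Proof.
  intros hx hy e. rewrite (qmap_P _ hx), (qmap_P _ hy) in e.
  apply (f_equal (@proj1_sig _ _)) in e. simpl in e.
  apply Etrans with (rep x). apply Esym, rep_spec; auto.
  rewrite e. apply rep_spec; auto.
Qed.

Lemma qmap_E x y : E x y -> qmap x = qmap y.
Proof.
  intro e. rewrite (qmap_P _ (EP _ _ e)), (qmap_P _ (EP _ _ (Esym _ _ e))). apply qmk_eq, e.
Qed.

Lemma qmap_surj (q : qmon) : exists z, P z /\ qmap z = q.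
Proof.
  destruct q as [z [hz ez]]. exists z. split; auto.
  rewrite (qmap_P _ hz). apply Q_eq. simpl. exact ez.
Qed.

Lemma qmon_finite (reps : list M) :
  (forall z, P z -> exists r, In r reps /\ E z r) -> finite_monoid qmon.
Proof.
  intro hr. exists (map qmap reps). intro q.
  destruct (qmap_surj q) as [z [hz <-]].
  destruct (hr z hz) as [r [hin e]]. apply in_map_iff. exists r. split; auto.
  rewrite (qmap_P _ hz), (qmap_P _ (EP _ _ (Esym _ _ e))). apply qmk_eq. apply Esym, e.
Qed.

End Quot.

Lemma kernel_fin {A B : Type} (P : A -> Prop) (f : A -> B) (lB : list B) :
  (forall a, P a -> In (f a) lB) ->
  exists reps : list A, (forall r, In r reps -> P r) /\
    forall a, P a -> exists r, In r reps /\ f a = f r.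
Proof.
  intro hf.
  assert (gen : forall l : list B, exists reps : list A, (forall r, In r reps -> P r) /\
    forall a, P a -> In (f a) l -> exists r, In r reps /\ f a = f r).
  { induction l as [|b l IH].
    - exists []. split; [intros r []|]. intros a _ [].
    - destruct IH as [reps [hP hr]].
      destruct (classic (exists a0, P a0 /\ f a0 = b)) as [[a0 [ha0 e0]]|nb].
      + exists (a0 :: reps). split.
        * intros r [<-|h]; auto.
        * intros a ha [e|h].
          -- exists a0. split; [left; reflexivity|]. congruence.
          -- destruct (hr a ha h) as [r [hin e]]. exists r. split; [right|]; auto.
      + exists reps. split; auto. intros a ha [e|h].
        * exfalso. apply nb. exists a. auto.
        * auto. }
  destruct (gen lB) as [reps [hP hr]]. exists reps. split; auto.
Qed.

Fixpoint all_lists {S : Type} (n : nat) (lS : list S) : list (list S) :=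
  match n with
  | O => [[]]
  | Datatypes.S n' => flat_map (fun x => map (cons x) (all_lists n' lS)) lS
  end.

Lemma all_lists_spec {S : Type} (lS : list S) (l : list S) :
  (forall x, In x l -> In x lS) -> In l (all_lists (length l) lS).
Proof.
  induction l as [|x l IH]; intro h; simpl.
  - left; reflexivity.
  - apply in_flat_map. exists x. split.
    + apply h. left; reflexivity.
    + apply in_map. apply IH. intros y hy. apply h. right; exact hy.
Qed.

Lemma map_eq_in {A B : Type} (f g : A -> B) (l : list A) :
  map f l = map g l -> forall x, In x l -> f x = g x.
Proof.
  induction l as [|y l IH]; simpl; intros e x hx; [destruct hx|].
  injection e as e1 e2. destruct hx as [<-|hx]; auto.
Qed.

Lemma forward (M : monoid) : residually_finite_monoid M -> forall a : M, schutz_residually_finite (Hclass a).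
Proof.
  intros rf a x y hx hy hns.
  pose (H := Hclass a).
  assert (ne : a ** x <> a ** y) by (intro e; apply hns; apply sigma_of_eq; auto).
  destruct (rf _ _ ne) as [N [f [[lN hN] [[f1 fm] fne]]]].
  pose (P := Stab H).
  pose (E := fun s t => P s /\ P t /\ f (a ** s) = f (a ** t)).
  assert (P1 : P mone) by apply Stab_one.
  assert (Pmul : forall x y, P x -> P y -> P (x ** y)) by (intros; apply Stab_mul; auto).
  assert (Erefl : forall x, P x -> E x x) by (intros; unfold E; auto).
  assert (Esym : forall x y, E x y -> E y x) by (unfold E; intros ? ? [? [? ?]]; auto).
  assert (Etrans : forall x y z, E x y -> E y z -> E x z)
    by (unfold E; intros ? ? ? [? [? ?]] [? [? ?]]; split; [assumption|split; [assumption|congruence]]).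
  assert (EP : forall x y, E x y -> P x) by (unfold E; intros ? ? [? ?]; auto).
  assert (Econg : forall x y z w, E x y -> E z w -> E (x ** z) (y ** w)).
  { intros x1 y1 z1 w1 [p1 [p2 e1]] [p3 [p4 e2]]. split; [|split]; auto.
    assert (hay : H (a ** y1)) by (apply Stab_maps; auto; apply a_in_H).
    apply Hclass_HH in hay as [_ [[p ep] _]].
    rewrite (mopA a x1 z1), (fm (a**x1) z1), e1, <- (fm (a**y1) z1), ep, <- (mopA p a z1), (fm p (a**z1)), e2, <- (fm p (a**w1)), (mopA p a w1), <- ep, <- (mopA a y1 w1). reflexivity. }
  destruct (kernel_fin P (fun s => f (a ** s)) lN) as [reps [hrP hreps]].
  { intros; apply hN. }
  pose (phi := qmap M P E P1 Pmul Erefl Esym Etrans EP Econg).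
  assert (linv : forall s, P s -> exists t, P t /\ mop (phi t) (phi s) = mone).
  { intros s hs. destruct (proj2 (hs a) (a_in_H M a)) as [h [hh eh]].
    destruct (F2 M a h hh) as [g [hg eg]]. exists g. split; auto.
    unfold phi. rewrite <- qmap_mul; auto. rewrite <- qmap_one. apply qmap_E.
    split; [|split]; auto. rewrite mopA, <- eg, <- eh, mop1r. reflexivity. }
  exists (qmon M P E P1 Pmul Erefl Esym Etrans EP Econg), phi. split; [|split; [|split]].
  - apply qmon_finite with reps. intros z hz. destruct (hreps z hz) as [r [hin e]].
    exists r. split; auto. split; [|split]; auto.
  - intro g. destruct (qmap_surj M P E P1 Pmul Erefl Esym Etrans EP Econg g) as [s [hs <-]].
    fold phi. destruct (linv s hs) as [t [ht e1]]. destruct (linv t ht) as [t' [ht' e2]].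
    exists (phi t). split; auto.
    transitivity (mop (mop (phi t') (phi t)) (mop (phi s) (phi t))).
    + rewrite e2, mop1l. reflexivity.
    + rewrite <- mopA, (mopA (phi t) (phi s) (phi t)), e1, mop1l. exact e2.
  - split; [|split].
    + apply qmap_one.
    + intros s t hs ht. apply qmap_mul; auto.
    + intros s t [hs [ht he]]. apply qmap_E. split; [|split]; auto.
      rewrite (he a (a_in_H M a)). reflexivity.
  - intro e. apply qmap_inj in e; auto. destruct e as [_ [_ e]]. contradiction.
Qed.

Arguments Ll {M}. Arguments Rr {M}. Arguments HH {M}.
Section Conv.
Variable M : monoid.
Variable a : M.
Variable G : monoid.
Variable psi : M -> G.
Variable lG : list G.
Hypothesis hG : forall g, In g lG.
Let H := Hclass a.
Hypothesis hpsi1 : psi mone = mone.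
Hypothesis hpsim : forall s t, Stab H s -> Stab H t -> psi (s ** t) = psi s ** psi t.
Hypothesis hpsis : forall s t, schsigma H s t -> psi s = psi t.
Variable lL : list (M -> Prop).
Hypothesis hlL : forall I, left_ideal I -> exists J, In J lL /\ subset_eq I J.
Variable lR : list (M -> Prop).
Hypothesis hlR : forall I, right_ideal I -> exists J, In J lR /\ subset_eq I J.

Definition Phi (z : M) : option G :=
  match excluded_middle_informative (exists g, Stab H g /\ z = a ** g) with
  | left e => Some (psi (proj1_sig (constructive_indefinite_description _ e)))
  | right _ => None
  end.

Lemma Phi_some g : Stab H g -> Phi (a ** g) = Some (psi g).
Proof.
  intro hg. unfold Phi. destruct (excluded_middle_informative _) as [e|n].
  - destruct (constructive_indefinite_description _ e) as [g' [hg' eg']]; simpl.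
    f_equal. apply hpsis. apply sigma_of_eq; auto.
  - exfalso. apply n. eauto.
Qed.

Lemma Phi_none z : ~ H z -> Phi z = None.
Proof.
  intro hz. unfold Phi. destruct (excluded_middle_informative _) as [[g [hg e]]|n]; auto.
  exfalso. apply hz. rewrite e. apply Stab_maps; auto. apply a_in_H.
Qed.

Definition starop (o : option G) (g : G) : option G :=
  match o with Some c => Some (c ** g) | None => None end.

Lemma mulstab c g : Stab H g -> (H (c ** g) -> H c) -> Phi (c ** g) = starop (Phi c) (psi g).
Proof.
  intros hg himp. destruct (classic (H c)) as [hc|hc].
  - destruct (F2 M a c hc) as [k [hk ek]]. rewrite ek, <- mopA, Phi_some, Phi_some; auto.
    + simpl. rewrite hpsim; auto.
    + apply Stab_mul; auto.
  - rewrite !Phi_none; auto.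
Qed.

Definition Lid (u : M) : M -> Prop := fun z => exists v, z = v ** u.
Definition Rid (l : M) : M -> Prop := fun z => exists c, z = l ** c.

Lemma Lid_left u : left_ideal (Lid u).
Proof.
  split.
  - exists u, mone. symmetry; apply mop1l.
  - intros m x [v e]. exists (m ** v). rewrite e. massoc.
Qed.

Lemma Rid_right l : right_ideal (Rid l).
Proof.
  split.
  - exists l, mone. symmetry; apply mop1r.
  - intros m x [v e]. exists (v ** m). rewrite e. massoc.
Qed.

Lemma Lid_self u : Lid u u.
Proof. exists mone. symmetry; apply mop1l. Qed.
Lemma Rid_self u : Rid u u.
Proof. exists mone. symmetry; apply mop1r. Qed.

Definition Jof (u : M) : M -> Prop :=
  epsilon (inhabits (fun _ : M => True)) (fun J => In J lL /\ subset_eq (Lid u) J).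

Lemma Jof_spec u : In (Jof u) lL /\ subset_eq (Lid u) (Jof u).
Proof.
  unfold Jof. apply (epsilon_spec (inhabits (fun _ : M => True)) (fun J => In J lL /\ subset_eq (Lid u) J)).
  apply hlL, Lid_left.
Qed.

Definition baseJ (J : M -> Prop) : M := epsilon (inhabits mone) (fun z => subset_eq (Lid z) J).
Definition base (u : M) : M := baseJ (Jof u).

Lemma base_spec u : subset_eq (Lid (base u)) (Jof u).
Proof.
  unfold base, baseJ. apply (epsilon_spec (inhabits mone) (fun z => subset_eq (Lid z) (Jof u))).
  exists u. apply Jof_spec.
Qed.

Lemma base_L u : Ll u (base u).
Proof.
  pose proof (base_spec u) as hb. pose proof (proj2 (Jof_spec u)) as hu. split.
  - apply (proj2 (hb u)), (proj1 (hu u)), Lid_self.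
  - apply (proj2 (hu (base u))), (proj1 (hb (base u))), Lid_self.
Qed.

Definition tof (u : M) : M := epsilon (inhabits mone) (fun t => u = t ** base u).
Lemma tof_spec u : u = tof u ** base u.
Proof.
  unfold tof. apply (epsilon_spec (inhabits mone) (fun t => u = t ** base u)).
  apply (proj1 (base_L u)).
Qed.

Definition lJ (K : M -> Prop) : M := epsilon (inhabits mone) (fun z => Ll z a /\ subset_eq (Rid z) K).

Lemma key0 l K : Ll l a -> subset_eq (Rid l) K ->
  exists g, Stab H g /\ forall t t', t' ** (t ** l) = l ->
    Phi (t ** l) = starop (Phi (t ** lJ K)) (psi g).
Proof.
  intros hla hK.
  assert (hm : Ll (lJ K) a /\ subset_eq (Rid (lJ K)) K).
  { unfold lJ. apply (epsilon_spec (inhabits mone) (fun z => Ll z a /\ subset_eq (Rid z) K)). eauto. }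
  set (m := lJ K) in *. destruct hm as [hma hmK].
  destruct hma as [[p ep] [q eq]].
  destruct (proj2 (hmK l) (proj1 (hK l) (Rid_self l))) as [c ec].
  destruct (proj2 (hK m) (proj1 (hmK m) (Rid_self m))) as [d ed].
  assert (lp : l = p ** (q ** l)).
  { symmetry. transitivity (p ** (q ** (m ** c))). { rewrite <- ec. reflexivity. }
    rewrite (mopA q m c), <- eq, mopA, <- ep. symmetry; exact ec. }
  assert (hh : H (q ** l)).
  { apply Hclass_HH. split.
    - split.
      + exists c. rewrite ec at 1. rewrite mopA, <- eq. reflexivity.
      + exists d. rewrite <- mopA, <- ed. exact eq.
    - apply Ll_trans with l; auto. split.
      + exists q. reflexivity.
      + exists p. exact lp. }
  destruct (F2 M a _ hh) as [g [hg eg]]. exists g. split; auto.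
  assert (elm : l = m ** g).
  { rewrite lp at 1. rewrite eg, mopA, <- ep. reflexivity. }
  intros t t' et.
  rewrite elm at 1. rewrite mopA. apply mulstab; auto.
  rewrite <- mopA, <- elm. intro htl. apply Hclass_HH in htl as [hR hLt].
  apply Hclass_HH. split.
  - apply Rr_trans with (t ** l); auto. split.
    + exists d. rewrite ed, mopA. reflexivity.
    + exists g. rewrite elm at 1. massoc.
  - apply Ll_trans with m.
    + split.
      * exists t. reflexivity.
      * exists t'. rewrite ed at 1. rewrite <- et at 1. rewrite ed. rewrite !mopA. reflexivity.
    + split; eauto.
Qed.

Lemma key1 b t1 t1' t2 t2' w : t1' ** (t1 ** b) = b -> t2' ** (t2 ** b) = b ->
  (forall K, In K lR -> Phi (t1 ** lJ K) = Phi (t2 ** lJ K)) ->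
  Phi (t1 ** (b ** w)) = Phi (t2 ** (b ** w)).
Proof.
  intros e1 e2 hK.
  assert (f1 : t1' ** (t1 ** (b ** w)) = b ** w) by (rewrite mopA, mopA, <- (mopA t1' t1 b), e1; reflexivity).
  assert (f2 : t2' ** (t2 ** (b ** w)) = b ** w) by (rewrite mopA, mopA, <- (mopA t2' t2 b), e2; reflexivity).
  set (l := b ** w) in *.
  destruct (classic (Ll l a)) as [hla|hla].
  - destruct (hlR _ (Rid_right l)) as [K [hin hK']].
    destruct (key0 l K hla hK') as [g [hg hgt]].
    rewrite (hgt t1 t1' f1), (hgt t2 t2' f2), (hK K hin). reflexivity.
  - assert (nn : forall t t', t' ** (t ** l) = l -> ~ H (t ** l)).
    { intros t t' et htl. apply Hclass_HH in htl as [_ hLt]. apply hla.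
      apply Ll_trans with (t ** l); auto. split; eauto. }
    rewrite !Phi_none; eauto.
Qed.

Definition sig (u : M) := (Jof u, map (fun K => Phi (tof u ** lJ K)) lR).

Lemma key_sig u v : sig u = sig v -> forall w, Phi (u ** w) = Phi (v ** w).
Proof.
  intros e w. unfold sig in e. injection e as eJ em.
  assert (eb : base u = base v) by (unfold base; rewrite eJ; reflexivity).
  destruct (base_L u) as [_ [q1 eq1]]. destruct (base_L v) as [_ [q2 eq2]].
  rewrite (tof_spec u), (tof_spec v) at 1. rewrite <- !mopA. rewrite <- eb.
  apply key1 with q1 q2.
  - rewrite <- tof_spec. symmetry; exact eq1.
  - rewrite eb, <- tof_spec. symmetry; exact eq2.
  - intros K hK. apply (map_eq_in _ _ _ em K hK).
Qed.

Definition lOG : list (option G) := None :: map Some lG.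
Definition lS := list_prod lL (all_lists (length lR) lOG).

Lemma sig_in u : In (sig u) lS.
Proof.
  unfold sig, lS. apply in_prod.
  - apply Jof_spec.
  - rewrite <- (length_map (fun K => Phi (tof u ** lJ K)) lR). apply all_lists_spec.
    intros o _. destruct o as [g|]; [right; apply in_map, hG | left; reflexivity].
Qed.

Definition Eq2 (u v : M) := forall p w, Phi (p ** u ** w) = Phi (p ** v ** w).

Lemma conv_main x y : Phi x <> Phi y ->
  exists (N : monoid) (f : M -> N), finite_monoid N /\ monoid_hom f /\ f x <> f y.
Proof.
  intro ne.
  destruct (kernel_fin (fun _ => True) sig lS) as [reps1 [_ hr1]]; [intros; apply sig_in|].
  pose (sig2 := fun u => map (fun r => sig (r ** u)) reps1).
  destruct (kernel_fin (fun _ => True) sig2 (all_lists (length reps1) lS)) as [reps2 [_ hr2]].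
  { intros u _. unfold sig2. rewrite <- (length_map (fun r => sig (r ** u)) reps1).
    apply all_lists_spec. intros; apply in_map_iff in H0 as [? [<- _]]; apply sig_in. }
  assert (s2E : forall u v, sig2 u = sig2 v -> Eq2 u v).
  { intros u v e p w. destruct (hr1 p I) as [r [hin er]].
    pose proof (key_sig _ _ er) as kp.
    pose proof (key_sig _ _ (map_eq_in _ _ _ e r hin)) as kr.
    rewrite <- !(mopA p), !kp, !mopA, kr. reflexivity. }
  assert (P1 : (fun _ : M => True) mone) by exact I.
  assert (Pmul : forall x y, (fun _ : M => True) x -> (fun _ : M => True) y -> (fun _ : M => True) (x ** y)) by auto.
  assert (Erefl : forall x, (fun _ : M => True) x -> Eq2 x x) by (intros; intros ? ?; reflexivity).
  assert (Esym : forall x y, Eq2 x y -> Eq2 y x) by (intros ? ? h ? ?; symmetry; apply h).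
  assert (Etrans : forall x y z, Eq2 x y -> Eq2 y z -> Eq2 x z) by (intros ? ? ? h1 h2 ? ?; rewrite h1; apply h2).
  assert (EP : forall x y, Eq2 x y -> (fun _ : M => True) x) by auto.
  assert (Econg : forall x y z w, Eq2 x y -> Eq2 z w -> Eq2 (x ** z) (y ** w)).
  { intros x1 y1 z1 w1 h1 h2 p q.
    transitivity (Phi (p ** x1 ** (z1 ** q))).
    { rewrite (mopA p x1 z1), (mopA (p**x1) z1 q). reflexivity. }
    rewrite h1, (mopA (p**y1) z1 q), h2, (mopA p y1 w1). reflexivity. }
  exists (qmon M _ Eq2 P1 Pmul Erefl Esym Etrans EP Econg), (qmap M _ Eq2 P1 Pmul Erefl Esym Etrans EP Econg).
  split; [|split; [split|]].
  - apply qmon_finite with reps2. intros z _. destruct (hr2 z I) as [r [hin e]]. eauto.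
  - apply qmap_one.
  - intros; apply qmap_mul; exact I.
  - intro e. apply qmap_inj in e; try exact I. apply ne.
    specialize (e mone mone). rewrite !mop1l, !mop1r in e. exact e.
Qed.

End Conv.

Definition unitmon : monoid.
Proof.
  refine (Monoid (fun _ _ : unit => tt) tt _ _ _); intros; try destruct x; reflexivity.
Defined.

Theorem mainTheorem20 (M : monoid)
  (hL : finitely_many (@left_ideal M))
  (hR : finitely_many (@right_ideal M)) :
  residually_finite_monoid M <->
  (forall a : M, schutz_residually_finite (Hclass a)).
Proof.
  split; [apply forward|].
  intros hs x y ne.
  destruct hL as [lL hlL]. destruct hR as [lR hlR].
  assert (px : forall (G : monoid) (psi : M -> G), (forall s t, schsigma (Hclass x) s t -> psi s = psi t) ->
            Phi M x G psi x = Some (psi mone)).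
  { intros G psi hσ. rewrite <- (Phi_some M x G psi hσ mone (Stab_one M x)), mop1r. reflexivity. }
  destruct (classic (Hclass x y)) as [hy|hy].
  - destruct (F2 M x y hy) as [s [hst e]].
    assert (hns : ~ schsigma (Hclass x) mone s).
    { intros [_ [_ h]]. apply ne. rewrite e, <- (h x (a_in_H M x)), mop1r. reflexivity. }
    destruct (hs x mone s (Stab_one M x) hst hns) as [G [psi [[lG hlG] [_ [[h1 [hm hσ]] hne]]]]].
    apply (conv_main M x G psi lG hlG hm hσ lL hlL lR hlR x y).
    rewrite (px G psi hσ), e, (Phi_some M x G psi hσ s hst). intro E. injection E. auto.
  - assert (hσ : forall s t, schsigma (Hclass x) s t -> (fun _ : M => tt : unitmon) s = (fun _ => tt) t)
      by reflexivity.
    apply (conv_main M x unitmon (fun _ => tt) [tt]) with lL lR; auto.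
    + intros []; left; reflexivity.
    + rewrite (px unitmon _ hσ), (Phi_none M x unitmon _ y hy). discriminate.
Qed.
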